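(* With the matrices defined in the context, $U\,V_\beta=K_\beta\,U$; i.e. the diagram $C_0\xrightarrow{U}H_0$, $V_\beta:C_0\to C_0$, $K_\beta:H_0\to H_0$, $C_0\xrightarrow{U}H_0$ commutes.
   Context: Setting. $I\subset\mathbb{R}$ compact interval; $f_i(x)=\rho_ix+\varrho_i$ ($i=1,\dots,n$), $0<|\rho_i|<1$, IFS with open set condition; $I$ is the union of a nonempty open interval $I_h$ (hole) and $f_1(I),\dots,f_n(I)$, with pairwise disjoint interiors and $I_h$ disjoint from the $f_i(I)$; $F(x)=f_i^{-1}(x)$ on $f_i(I)$. The laps $I_1,\dots,I_n$ (left to right) and the hole have endpoints $a_1<\dots<a_{n+2}$, hole $(a_h,a_{h+1})$; interior endpoints are turning/discontinuity points. Assume the forward orbit of every one-sided endpoint $a_i^\pm$ is finite. Points $y^{(1)},\dots,y^{(q)}$: the one-sided endpoints $a_1^+,a_2^-,a_2^+,\dots,a_{n+2}^-$ (with $a_i^-,a_i^+$ consecutive) together with all other points of their forward orbits, ordered along $I$; $C_0=\mathbb{R}^q$ with $y^{(i)}$ the $i$-th standard basis vector; $H_0=\mathbb{R}^n$ with basis indexed by the laps. $V_\beta=[v_{ij}]$ ($q\times q$, $\beta\in\mathbb{R}$): if $F(y^{(j)})=y^{(i)}$, $v_{ij}=\varepsilon(y^{(j)})|F'(y^{(j)})|^{-\beta}$ with $\varepsilon$ the sign of $F'$ at $y^{(j)}$ (column zero for limits from inside the hole); for every pair of consecutive entries that are the two one-sided versions of a turning/discontinuity point between $y^{(j)}$ and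 $y^{(i)}$: if $y^{(i)}>y^{(j)}$, pair $y^{(k)},y^{(k+1)}$, $j\le k<i$, set $v_{kj}=v_{ij}$, $v_{k+1,j}=-v_{ij}$; if $y^{(i)}<y^{(j)}$, pair $y^{(k-1)},y^{(k)}$, $i<k\le j$, set $v_{k-1,j}=-v_{ij}$, $v_{kj}=v_{ij}$; all other entries $0$. $U$ is the $n\times q$ matrix with entry $(j,i)$ equal to $1$ if $y^{(i)}\in I_j$, else $0$. $K_\beta$ is the $n\times n$ diagonal matrix with $k_{ii}=\varepsilon(I_i)|F'|_{I_i}|^{-\beta}$, $\varepsilon(I_i)$ the sign of $F'$ on $I_i$. *)

(* Defs.v *)
From HB Require Import structures.
From mathcomp Require Import all_boot all_order all_algebra.
From mathcomp Require Import all_classical all_reals all_analysis.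
Set Implicit Arguments. Unset Strict Implicit. Unset Printing Implicit Defensive.
Import Order.TTheory GRing.Theory Num.Theory.
Local Open Scope ring_scope.

(* Conventions (0-based):
   endpoints a 0 < a 1 < ... < a n.+1, I = [a 0, a n.+1];
   hole = (a h, a h.+1) with h <= n;
   laps I_0,...,I_{n-1} (left to right) are the remaining intervals
   [a (lapl j), a (lapl j).+1];
   the IFS maps are f_i(x) = rho i * x + varrho i, and f_(tau j)(I) = I_j,
   so F = f_(tau j)^{-1} on I_j.
   A one-sided point is a pair (x, s) : R * bool, s = true meaning x^+
   (limit from the right) and s = false meaning x^- (limit from the left). *)

Section Defs.
Variable R : realType.
Variables (n h : nat) (a : nat -> R) (rho varrho : 'I_n -> R) (tau : 'I_n -> 'I_n).

Definition lapl (j : 'I_n) : nat := if (j < h)%N then (j : nat) else (j : nat).+1.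

Definition inlap (j : 'I_n) (p : R * bool) : bool :=
  if p.2 then (a (lapl j) <= p.1) && (p.1 < a (lapl j).+1)
  else (a (lapl j) < p.1) && (p.1 <= a (lapl j).+1).

Definition Fder (j : 'I_n) : R := (rho (tau j))^-1.

(* F acting on one-sided points; None for limits from inside the hole *)
Definition Fos (p : R * bool) : option (R * bool) :=
  match [pick j | inlap j p] with
  | Some j => Some ((p.1 - varrho (tau j)) / rho (tau j),
                    if 0 < rho (tau j) then p.2 else ~~ p.2)
  | None => None
  end.

Fixpoint Fiter (m : nat) (p : R * bool) : option (R * bool) :=
  match m with 0 => Some p | m'.+1 => obind Fos (Fiter m' p) end.

Definition is_endpoint (e : R * bool) : Prop :=
  e = (a 0%N, true) \/ e = (a n.+1, false) \/
  exists k, (1 <= k <= n)%N /\ (e = (a k, false) \/ e = (a k, true)).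

Definition inY (p : R * bool) : Prop :=
  exists e m, is_endpoint e /\ Fiter m e = Some p.

Definition oslt (p p' : R * bool) : bool :=
  (p.1 < p'.1) || ((p.1 == p'.1) && ~~ p.2 && p'.2).

(* turning / discontinuity points: the interior endpoints a 1, ..., a n *)
Definition is_tp (x : R) : bool := [exists m : 'I_n, x == a m.+1].

Definition weight (beta : R) (j : 'I_n) : R :=
  Num.sg (Fder j) * powR `|Fder j| (- beta).

Variables (q : nat) (y : 'I_q -> R * bool) (beta : R).

Definition target (j : 'I_q) : option ('I_q * R) :=
  match [pick l | inlap l (y j)], Fos (y j) with
  | Some l, Some p =>
      match [pick i | y i == p] with
      | Some i => Some (i, weight beta l)
      | None => None
      end
  | _, _ => None
  end.

Definition cpair (k l : 'I_q) : bool :=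
  (nat_of_ord l == k.+1) && ((y k).1 == (y l).1) && is_tp (y k).1
  && ~~ (y k).2 && (y l).2.

Definition ventry (k j : 'I_q) : R :=
  match target j with
  | None => 0
  | Some (i, w) =>
    if k == i then w else
    if oslt (y j) (y i) then
      (if [exists l, cpair k l] && (j <= k < i)%N then w
       else if [exists l, cpair l k && (j <= l < i)%N] then - w else 0)
    else if oslt (y i) (y j) then
      (if [exists l, cpair l k] && (i < k <= j)%N then w
       else if [exists l, cpair k l && (i < l <= j)%N] then - w else 0)
    else 0
  end.

Definition Vmat : 'M[R]_q := \matrix_(k, j) ventry k j.

Definition Umat : 'M[R]_(n, q) := \matrix_(j, i) (if inlap j (y i) then 1 else 0).

Definition Kmat : 'M[R]_n := \matrix_(i, j) (if i == j then weight beta i else 0).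

End Defs.

(* Main.v *)
Require Import Defs.
From HB Require Import structures.
From mathcomp Require Import all_boot all_order all_algebra.
From mathcomp Require Import all_classical all_reals all_analysis.
From mathcomp Require Import zify ring lra.
Import Order.TTheory GRing.Theory Num.Theory.
Local Open Scope ring_scope.
Set Implicit Arguments. Unset Strict Implicit.

Section S.
Variables (R : realType) (n h : nat) (a : nat -> R)
  (rho varrho : 'I_n -> R) (tau : 'I_n -> 'I_n) (beta : R).
Hypothesis Ha : forall k, (k <= n)%N -> a k < a k.+1.
Hypothesis Hh : (h <= n)%N.
Hypothesis Hrho : forall i, 0 < `|rho i| < 1.
Hypothesis Hset : forall j : 'I_n,
     [set rho (tau j) * x + varrho (tau j) | x in [set x | a 0%N <= x <= a n.+1]]%classic
     = [set x | a (lapl h j) <= x <= a (lapl h j).+1]%classic.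

Definition ep (k : nat) : R * bool := (a k.+1./2, odd k.+1).

Lemma ep_even u : ep u.*2 = (a u, true).
Proof. by rewrite /ep /= uphalf_double odd_double. Qed.
Lemma ep_odd u : ep u.*2.+1 = (a u.+1, false).
Proof. rewrite /ep /= negbK odd_double; congr (a _, _); by rewrite doubleK. Qed.

Lemma nat_par k : (exists u, k = u.*2) \/ (exists u, k = u.*2.+1).
Proof.
have := odd_double_half k; case: (odd k) => /= E; [right|left]; exists k./2; lia.
Qed.

Lemma a_lt i j : (i < j)%N -> (j <= n.+1)%N -> a i < a j.
Proof.
elim: j => // j IH; rewrite ltnS leq_eqVlt => /orP [/eqP ->|lij] Hj.
  by apply: Ha.
by apply: lt_trans (IH lij (ltnW Hj)) (Ha _).
Qed.

Lemma a_ltE i j : (i <= n.+1)%N -> (j <= n.+1)%N -> (a i < a j) = (i < j)%N.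
Proof.
move=> Hi Hj; case: (ltnP i j) => [lij|lji]; first by rewrite a_lt.
apply/negbTE; rewrite -leNgt; move: lji; rewrite leq_eqVlt => /orP [/eqP->//|lji].
by apply/ltW/a_lt.
Qed.

Lemma a_leE i j : (i <= n.+1)%N -> (j <= n.+1)%N -> (a i <= a j) = (i <= j)%N.
Proof. by move=> Hi Hj; rewrite leNgt a_ltE // -leqNgt. Qed.

Lemma a_eqE i j : (i <= n.+1)%N -> (j <= n.+1)%N -> (a i == a j) = (i == j).
Proof. by move=> Hi Hj; rewrite eq_le !a_leE // -eqn_leq. Qed.

Lemma lapl_le (j : 'I_n) : (lapl h j <= n)%N.
Proof. rewrite /lapl; have := ltn_ord j; case: ifP => _; lia. Qed.

Lemma lapl_inj : injective (lapl h : 'I_n -> nat).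
Proof. move=> j j'; rewrite /lapl => E; apply/val_inj => /=; move: E; do 2 case: ifP; lia. Qed.

Lemma inlap_ep (j : 'I_n) k : (k < n.*2.+2)%N -> inlap h a j (ep k) = (k./2 == lapl h j).
Proof.
have := lapl_le j; rewrite /inlap.
case: (nat_par k) => -[u ->] Hl Hk.
  rewrite ep_even /= doubleK !a_ltE ?a_leE //; try lia.
have E : u.*2.+1./2 = u by exact: uphalf_double.
rewrite ep_odd /= uphalf_double !a_ltE ?a_leE //; try lia.
Qed.


Lemma aff_facts (j : 'I_n) :
  (forall x, a 0 <= x <= a n.+1 ->
     a (lapl h j) <= rho (tau j) * x + varrho (tau j) <= a (lapl h j).+1) /\
  (forall z, a (lapl h j) <= z <= a (lapl h j).+1 ->
     exists2 x, a 0 <= x <= a n.+1 & rho (tau j) * x + varrho (tau j) = z).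
Proof.
split.
  move=> x Hx.
  have : [set rho (tau j) * x + varrho (tau j) | x in [set x | a 0%N <= x <= a n.+1]]%classic
          (rho (tau j) * x + varrho (tau j)) by exists x.
  by rewrite Hset.
move=> z Hz.
have : [set x | a (lapl h j) <= x <= a (lapl h j).+1]%classic z by [].
by rewrite -Hset => -[x Hx E]; exists x.
Qed.

Lemma aff_pos (j : 'I_n) : 0 < rho (tau j) ->
  rho (tau j) * a 0 + varrho (tau j) = a (lapl h j) /\
  rho (tau j) * a n.+1 + varrho (tau j) = a (lapl h j).+1.
Proof.
move=> rp; have [img pre] := aff_facts j.
have I0 : a 0 < a n.+1 by apply: a_lt.
have aL : a (lapl h j) < a (lapl h j).+1 by apply/Ha/lapl_le.
have /andP[h1 h2] := img (a 0) ltac:(apply/andP; split; lra).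
have /andP[h3 h4] := img (a n.+1) ltac:(apply/andP; split; lra).
have [x /andP[x1 x2] Ex] := pre (a (lapl h j)) ltac:(apply/andP; split; lra).
have [x' /andP[x1' x2'] Ex'] := pre (a (lapl h j).+1) ltac:(apply/andP; split; lra).
have m1 : rho (tau j) * a 0 <= rho (tau j) * x by rewrite ler_pM2l.
have m2 : rho (tau j) * x' <= rho (tau j) * a n.+1 by rewrite ler_pM2l.
split; lra.
Qed.

Lemma aff_neg (j : 'I_n) : rho (tau j) < 0 ->
  rho (tau j) * a 0 + varrho (tau j) = a (lapl h j).+1 /\
  rho (tau j) * a n.+1 + varrho (tau j) = a (lapl h j).
Proof.
move=> rp; have [img pre] := aff_facts j.
have I0 : a 0 < a n.+1 by apply: a_lt.
have aL : a (lapl h j) < a (lapl h j).+1 by apply/Ha/lapl_le.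
have /andP[h1 h2] := img (a 0) ltac:(apply/andP; split; lra).
have /andP[h3 h4] := img (a n.+1) ltac:(apply/andP; split; lra).
have [x /andP[x1 x2] Ex] := pre (a (lapl h j)) ltac:(apply/andP; split; lra).
have [x' /andP[x1' x2'] Ex'] := pre (a (lapl h j).+1) ltac:(apply/andP; split; lra).
have m1 : rho (tau j) * x' <= rho (tau j) * a 0 by rewrite ler_nM2l.
have m2 : rho (tau j) * a n.+1 <= rho (tau j) * x by rewrite ler_nM2l.
split; lra.
Qed.


Lemma ep0 : ep 0 = (a 0, true). Proof. by []. Qed.
Lemma epN : ep n.*2.+1 = (a n.+1, false). Proof. exact: ep_odd. Qed.

Lemma rho_neq0 i : rho i != 0.
Proof. by have /andP[+ _] := Hrho i; rewrite normr_gt0. Qed.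

Lemma Fstep (j : 'I_n) k : (k < n.*2.+2)%N -> inlap h a j (ep k) ->
  (((ep k).1 - varrho (tau j)) / rho (tau j),
   if 0 < rho (tau j) then (ep k).2 else ~~ (ep k).2) = ep 0 \/
  (((ep k).1 - varrho (tau j)) / rho (tau j),
   if 0 < rho (tau j) then (ep k).2 else ~~ (ep k).2) = ep n.*2.+1.
Proof.
move=> Hk; rewrite inlap_ep // => /eqP HL.
have r0 := rho_neq0 (tau j).
rewrite ep0 epN.
have [rn|rp] : rho (tau j) < 0 \/ 0 < rho (tau j).
  by move: r0; rewrite neq_lt => /orP.
- have [E1 E2] := aff_neg rn; have nrp : (0 < rho (tau j)) = false.
    by apply/negbTE; rewrite -leNgt ltW.
  case: (nat_par k) => -[u Eu]; subst k.
  + rewrite ep_even /= nrp; move: HL; rewrite doubleK => ->; right.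
    by congr pair; rewrite -E2; field.
  + rewrite ep_odd /= nrp; move: HL; rewrite -[u.*2.+1./2]/(uphalf u.*2) uphalf_double => ->.
    left; by congr pair; rewrite -E1; field.
- have [E1 E2] := aff_pos rp.
  case: (nat_par k) => -[u Eu]; subst k.
  + rewrite ep_even /= rp; move: HL; rewrite doubleK => ->; left.
    by congr pair; rewrite -E1; field.
  + rewrite ep_odd /= rp; move: HL; rewrite -[u.*2.+1./2]/(uphalf u.*2) uphalf_double => ->.
    right; by congr pair; rewrite -E2; field.
Qed.


Lemma endpoint_ep e : is_endpoint n a e -> exists2 k, (k < n.*2.+2)%N & e = ep k.
Proof.
case=> [->|[->|[k [Hk [->|->]]]]].
- by exists 0%N.
- by exists n.*2.+1; rewrite ?epN.
- exists k.-1.*2.+1; first lia.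
  by rewrite ep_odd prednK //; case/andP: Hk.
- exists k.*2; first lia.
  by rewrite ep_even.
Qed.

Lemma ep_endpoint k : (k < n.*2.+2)%N -> is_endpoint n a (ep k).
Proof.
move=> Hk; case: (nat_par k) => -[u Eu]; subst k.
- rewrite ep_even; case: u Hk => [|u] Hk; first by left.
  right; right; exists u.+1; split; [lia | by right].
- rewrite ep_odd; case: (eqVneq u n) => [->|Hu]; first by right; left.
  right; right; exists u.+1; split; [lia | by left].
Qed.

Lemma Fos_ep k p : (k < n.*2.+2)%N -> Fos h a rho varrho tau (ep k) = Some p ->
  p = ep 0 \/ p = ep n.*2.+1.
Proof. by move=> Hk; rewrite /Fos; case: pickP => [j Hj|_] // [<-]; exact: Fstep. Qed.

Lemma inY_ep p : inY h a rho varrho tau p -> exists2 k, (k < n.*2.+2)%N & p = ep k.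
Proof.
case=> e [m [He Hm]]; elim: m p Hm => [|m IH] p /=.
  by case=> <-; apply: endpoint_ep.
case E: (Fiter h a rho varrho tau m e) => [p0|] //= Hp.
have [k Hk Ep0] := IH _ E; rewrite Ep0 in Hp.
by case: (Fos_ep Hk Hp) => ->; [exists 0%N | exists n.*2.+1].
Qed.

Lemma ep_inY k : (k < n.*2.+2)%N -> inY h a rho varrho tau (ep k).
Proof. by move=> Hk; exists (ep k), 0%N; split => //; apply: ep_endpoint. Qed.

Lemma oslt_ep k k' : (k < n.*2.+2)%N -> (k' < n.*2.+2)%N ->
  oslt (ep k) (ep k') = (k < k')%N.
Proof.
move=> Hk Hk'; rewrite /oslt.
case: (nat_par k) => -[u Eu]; subst k; case: (nat_par k') => -[u' Eu']; subst k';
  rewrite ?ep_even ?ep_odd /= ?a_ltE ?a_eqE ?andbT ?andbF ?orbF; try lia.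
Qed.

Lemma ep_inj k k' : (k < n.*2.+2)%N -> (k' < n.*2.+2)%N -> ep k = ep k' -> k = k'.
Proof.
move=> Hk Hk' E.
have h1 := oslt_ep Hk Hk'; have h2 := oslt_ep Hk' Hk.
have h3 := oslt_ep Hk Hk; rewrite E in h1 h3; rewrite -E in h2.
rewrite ltnn in h3; rewrite h3 in h1; have h4 := oslt_ep Hk Hk.
rewrite E h3 in h2. lia.
Qed.


Lemma y_struct q (y : 'I_q -> R * bool) :
  (forall i j : 'I_q, (i < j)%N -> oslt (y i) (y j)) ->
  (forall p, (exists i, y i = p) <-> inY h a rho varrho tau p) ->
  q = n.*2.+2 /\ forall t : 'I_q, y t = ep t.
Proof.
move=> Hmono H7.
have Hy t : exists2 k, (k < n.*2.+2)%N & y t = ep k.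
  by apply: inY_ep; apply/H7; exists t.
have Hs k : (k < n.*2.+2)%N -> exists t, y t = ep k.
  by move=> Hk; apply/H7; apply: ep_inY.
pose f (t : 'I_q) : 'I_(n.*2.+2) := odflt ord0 [pick k : 'I_(n.*2.+2) | y t == ep k].
have Ef t : y t = ep (f t).
  rewrite /f; case: pickP => [k /eqP //| H]; exfalso.
  by have [k Hk E] := Hy t; have := H (Ordinal Hk); rewrite E eqxx.
have fmono (t t' : 'I_q) : (t < t')%N -> (f t < f t')%N.
  by move=> Htt; have := Hmono t t' Htt; rewrite !Ef oslt_ep.
have finj : injective f.
  move=> t t' E; have [Htt|Htt|Htt] := ltngtP t t'.
  - by have := fmono _ _ Htt; rewrite E ltnn.
  - by have := fmono _ _ Htt; rewrite E ltnn.
  - exact: val_inj.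
have q1 : (q <= n.*2.+2)%N by have := leq_card f finj; rewrite !card_ord.
have q2 : (n.*2.+2 <= q)%N.
  have : [set f t | t in 'I_q] = [set: 'I_(n.*2.+2)].
    apply/setP => k; rewrite inE; apply/imsetP.
    have [t Et] := Hs k (ltn_ord k); exists t => //.
    apply/val_inj; apply: ep_inj; [exact: ltn_ord | exact: ltn_ord | by rewrite -Ef Et].
  by move=> E; have := leq_imset_card f 'I_q; rewrite E cardsT !card_ord.
have Eq : q = n.*2.+2 by apply/eqP; rewrite eqn_leq q1 q2.
have ge : forall m (Hm : (m < q)%N), (m <= f (Ordinal Hm))%N.
  elim => [|m IH] Hm //; have := IH (ltnW Hm).
  have := fmono (Ordinal (ltnW Hm)) (Ordinal Hm) (ltnSn m); lia.
have le : forall d m (Hm : (m < q)%N), (m + d = q.-1)%N -> (f (Ordinal Hm) <= m)%N.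
  elim => [|d IH] m Hm Hd.
    have := ltn_ord (f (Ordinal Hm)); lia.
  have Hm1 : (m.+1 < q)%N by lia.
  have := IH m.+1 Hm1 ltac:(lia).
  have := fmono (Ordinal Hm) (Ordinal Hm1) (ltnSn m); lia.
split => // -[m Hm]; rewrite Ef; congr ep; apply/eqP; rewrite eqn_leq ge andbT.
by apply: (le (q.-1 - m)%N); lia.
Qed.


Notation N := (n.*2.+2).
Definition Y := fun t : 'I_N => ep t.

Lemma cpair_ep (k l : 'I_N) : cpair n a Y k l = ((l:nat) == k.+1) && odd k.
Proof.
rewrite /cpair /Y; case: (eqVneq (l:nat) k.+1) => [El|Nl] //; rewrite ?andbF //.
have Hl := ltn_ord l.
case: (nat_par k) => -[u Eu].
  by rewrite Eu ep_even /= !andbF odd_double.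
have El' : ep l = (a u.+1, true) by rewrite El Eu -doubleS ep_even.
rewrite Eu ep_odd El' /= odd_double eqxx !andbT /=.
have Hu : (u < n)%N by lia.
by apply/existsP; exists (Ordinal Hu).
Qed.

Lemma ex_cpair_r (k : 'I_N) (P : nat -> bool) :
  [exists l : 'I_N, cpair n a Y k l && P l] = [&& odd k, (k.+1 < N)%N & P k.+1].
Proof.
apply/existsP/idP.
  by case=> l; rewrite cpair_ep => /andP[/andP[/eqP El ->]]; rewrite -El ltn_ord.
case/and3P=> o Hk Pk; exists (Ordinal Hk); by rewrite cpair_ep /= eqxx o.
Qed.

Lemma ex_cpair_r' (k : 'I_N) :
  [exists l : 'I_N, cpair n a Y k l] = odd k && (k.+1 < N)%N.
Proof.
have := ex_cpair_r k (fun _ => true); rewrite andbT => <-.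
by apply/existsP/existsP => -[l Hl]; exists l; rewrite ?andbT in Hl *.
Qed.

Lemma ex_cpair_l (k : 'I_N) (P : nat -> bool) :
  [exists l : 'I_N, cpair n a Y l k && P l] = [&& ~~ odd k, (0 < k)%N & P k.-1].
Proof.
apply/existsP/idP.
  case=> l; rewrite cpair_ep => /andP[/andP[/eqP El o] Pl].
  by rewrite El /= o /= Pl.
case/and3P=> o Hk Pk; have Hk' : (k.-1 < N)%N by have := ltn_ord k; lia.
exists (Ordinal Hk'); rewrite cpair_ep /= prednK // eqxx Pk andbT /=.
by move: o; rewrite -{1}(prednK Hk) /= negbK.
Qed.

Lemma ex_cpair_l' (k : 'I_N) :
  [exists l : 'I_N, cpair n a Y l k] = ~~ odd k && (0 < k)%N.
Proof.
have := ex_cpair_l k (fun _ => true); rewrite andbT => <-.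
by apply/existsP/existsP => -[l Hl]; exists l; rewrite ?andbT in Hl *.
Qed.


Lemma pick_ep (i0 : 'I_N) : [pick i : 'I_N | ep i == ep i0] = Some i0.
Proof.
case: pickP => [i /eqP E|H]; last by have := H i0; rewrite eqxx.
by congr Some; apply/val_inj/ep_inj => //; apply: ltn_ord.
Qed.

Lemma pick_lap (c : 'I_N) (l : 'I_n) : inlap h a l (ep c) ->
  [pick l' : 'I_n | inlap h a l' (ep c)] = Some l.
Proof.
move=> Hl; case: pickP => [l' Hl'|H]; last by rewrite H in Hl.
congr Some; apply: lapl_inj.
move: Hl Hl'; rewrite !inlap_ep ?ltn_ord // => /eqP <- /eqP <- //.
Qed.

Lemma target_none (c : 'I_N) : (forall l : 'I_n, ~~ inlap h a l (ep c)) ->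
  target h a rho varrho tau Y beta c = None.
Proof.
move=> H; rewrite /target /Y; case: pickP => [l Hl|] //.
by rewrite (negbTE (H l)) in Hl.
Qed.

Lemma target_some (c : 'I_N) (l : 'I_n) : inlap h a l (ep c) ->
  exists2 i0 : 'I_N, ((i0 : nat) == 0%N) || ((i0 : nat) == N.-1) &
    target h a rho varrho tau Y beta c = Some (i0, weight rho tau beta l).
Proof.
move=> Hl; rewrite /target /Fos /Y (pick_lap Hl).
have [E|E] := Fstep (ltn_ord c) Hl; rewrite E.
  by exists ord0 => //; rewrite (pick_ep ord0).
by exists ord_max; rewrite ?eqxx ?orbT // (pick_ep ord_max).
Qed.


Lemma sum_two (F : 'I_N -> R) (L : nat) (k0 k1 : 'I_N) :
  (k0 : nat) = L.*2 -> (k1 : nat) = L.*2.+1 ->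
  \sum_(k < N) (if (k./2 == L) then 1 else 0) * F k = F k0 + F k1.
Proof.
move=> e0 e1.
have h0 : (k0./2 == L) by rewrite e0 doubleK.
have h1 : (k1./2 == L) by rewrite e1 /= uphalf_double.
rewrite (bigD1 k0) //= (bigD1 k1) /=; last by rewrite -val_eqE /=; lia.
rewrite big1 ?h0 ?h1 ?mul1r ?addr0 //.
move=> k /andP[n1 n0]; case: ifP; rewrite ?mul0r // => /eqP E.
exfalso; move: n1 n0; rewrite -!val_eqE /=.
have := odd_double_half k; rewrite E; case: (odd k) => /=; lia.
Qed.


Lemma main_entry (j : 'I_n) (c : 'I_N) :
  \sum_(k < N) (if inlap h a j (ep k) then 1 else 0) *
      ventry h a rho varrho tau Y beta k c
  = weight rho tau beta j * (if inlap h a j (ep c) then 1 else 0).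
Proof.
have HL := lapl_le j.
have E (k : 'I_N) : inlap h a j (ep k) = (k./2 == lapl h j) by exact: (inlap_ep j (ltn_ord k)).
under eq_bigr => k _ do rewrite E.
have hk0 : ((lapl h j).*2 < N)%N by lia.
have hk1 : ((lapl h j).*2.+1 < N)%N by lia.
rewrite (@sum_two _ _ (Ordinal hk0) (Ordinal hk1)) // inlap_ep ?ltn_ord //.
case: (pickP (fun l : 'I_n => inlap h a l (ep c))) => [l Hl | Hn]; last first.
  rewrite /ventry target_none; last by move=> l; rewrite Hn.
  have := Hn j; rewrite inlap_ep ?ltn_ord // => ->; by rewrite addr0 mulr0.
have [i0 Hi0 Ht] := target_some Hl.
have Hcl : c./2 = lapl h l by move: Hl; rewrite inlap_ep ?ltn_ord // => /eqP.
rewrite /ventry Ht /Y !oslt_ep ?ltn_ord //.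
rewrite !ex_cpair_r' !ex_cpair_l'.
rewrite !(ex_cpair_l _ (fun l => (c <= l < i0)%N)) !(ex_cpair_r _ (fun l => (i0 < l <= c)%N)).
rewrite -!val_eqE /=.
have Hc := ltn_ord c.
have [Ecl|Ncl] := eqVneq (c./2) (lapl h j).
  have El : l = j by apply: lapl_inj; rewrite -Hcl.
  rewrite El mulr1.
  move: (weight rho tau beta j) => w.
  move: Ecl Hc; case: (nat_par c) => -[u ->]; rewrite ?doubleK ?uphalf_double => Eu Hc;
  move: Hi0 => /orP [/eqP -> | /eqP ->]; rewrite ?odd_double /=; 
  repeat case: ifP => ?; try lia; rewrite ?addr0 ?add0r ?addrN ?addNr //.
rewrite mulr0; move: (weight rho tau beta l) => w.
move: Ncl Hc; case: (nat_par c) => -[u ->]; rewrite ?doubleK ?uphalf_double => Eu Hc;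
move: Hi0 => /orP [/eqP -> | /eqP ->]; rewrite ?odd_double /=;
repeat case: ifP => ?; try lia; rewrite ?addr0 ?add0r ?addrN ?addNr //.
Qed.

End S.



Unset Implicit Arguments.
Set Strict Implicit.

Theorem lemma3 (R : realType) (n h : nat) (a : nat -> R)
  (rho varrho : 'I_n -> R) (tau : 'I_n -> 'I_n) (beta : R)
  (q : nat) (y : 'I_q -> R * bool) :
  (forall k, (k <= n)%N -> a k < a k.+1) ->
  (h <= n)%N ->
  (forall i, 0 < `|rho i| < 1) ->
  bijective tau ->
  (forall j : 'I_n,
     [set rho (tau j) * x + varrho (tau j) | x in [set x | a 0%N <= x <= a n.+1]]%classic
     = [set x | a (lapl h j) <= x <= a (lapl h j).+1]%classic) ->
  (forall i j : 'I_q, (i < j)%N -> oslt (y i) (y j)) ->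
  (forall p, (exists i, y i = p) <-> inY h a rho varrho tau p) ->
  Umat n h a y *m Vmat h a rho varrho tau y beta
  = Kmat rho tau beta *m Umat n h a y.
Proof.
move=> Ha Hh Hrho Htau Hset Hmono H7.
have [Eq Hy] := y_struct Ha Hh Hrho Hset Hmono H7.
subst q.
have -> : y = Y a by apply/funext => t; rewrite Hy.
apply/matrixP => j c; rewrite !mxE.
under eq_bigr => k _ do rewrite !mxE.
rewrite [in RHS](bigD1 j) //= [in RHS]big1 ?addr0; last first.
  by move=> k Hk; rewrite !mxE eq_sym (negbTE Hk) mul0r.
rewrite !mxE eqxx.
exact: (main_entry beta Ha Hh Hrho Hset j c).
Qed.
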